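(* Let $A$ be a commutative quasi-ring and $I$ an ideal of $A$. Then congruence modulo $I$ is compatible with the addition and the multiplication of $A$, so that the quotient $A/I$ is a quasi-ring. Moreover, if $I\neq A$, then $A/I$ is not trivial, i.e. $1\not\equiv 0 \pmod I$.
   Context: A semiring is a set with two operations $+,\cdot$ such that $(A,+)$ is a commutative monoid with neutral element $0$, $(A,\cdot)$ is a monoid with unit $1$, multiplication distributes over addition, and $0$ is absorbing. A quasi-ring is a semiring whose unit $1$ is quasi-invertible for addition (there is $y$ with $1+y+1=1$, $y+1+y=y$). An ideal of a commutative quasi-ring $A$ is a subset $I$ containing $0$, stable under addition and under multiplication by elements of $A$. Congruence modulo $I$: for $a,b\in A$, $a\equiv b \pmod I$ if and only if $(a+I)\cap(b+I)\neq\emptyset$ and, for every $c\in I$ and every $r\in A$, one has $ac+r\in I \iff bc+r\in I$. $A/I$ denotes the set of congruence classes. *)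

(* Defs.v *)
From Stdlib Require Import RelationClasses.

Section Defs.
Context {A : Type} (add mul : A -> A -> A) (zero one : A).

Definition comm_semiring : Prop :=
  (forall x y z, add x (add y z) = add (add x y) z) /\
  (forall x y, add x y = add y x) /\
  (forall x, add zero x = x) /\
  (forall x y z, mul x (mul y z) = mul (mul x y) z) /\
  (forall x y, mul x y = mul y x) /\
  (forall x, mul one x = x) /\
  (forall x y z, mul x (add y z) = add (mul x y) (mul x z)) /\
  (forall x y z, mul (add x y) z = add (mul x z) (mul y z)) /\
  (forall x, mul zero x = zero /\ mul x zero = zero).

Definition quasi_invertible (x : A) : Prop :=
  exists y, add (add x y) x = x /\ add (add y x) y = y.

Definition comm_quasi_ring : Prop :=
  comm_semiring /\ quasi_invertible one.

Definition is_ideal (I : A -> Prop) : Prop :=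
  I zero /\
  (forall x y, I x -> I y -> I (add x y)) /\
  (forall a x, I x -> I (mul a x)).

Definition cong_mod (I : A -> Prop) (a b : A) : Prop :=
  (exists i j, I i /\ I j /\ add a i = add b j) /\
  (forall c r, I c -> (I (add (mul a c) r) <-> I (add (mul b c) r))).

End Defs.

(* Main.v *)
Require Import Defs.
From Stdlib Require Import RelationClasses.
From Stdlib Require Import ClassicalEpsilon FunctionalExtensionality PropExtensionality ProofIrrelevance.

Lemma cong_equiv (A : Type) (add mul : A -> A -> A) (zero one : A) (I : A -> Prop) :
  comm_semiring add mul zero one -> is_ideal add mul zero I ->
  Equivalence (cong_mod add mul I).
Proof.
  intros [addA [addC [add0 [mulA [mulC [mul1 [mulDr [mulDl mul0]]]]]]]] [I0 [IA IM]].
  split.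
  - intros a. split; [exists zero, zero; auto | tauto].
  - intros a b [[i [j [Hi [Hj E]]]] H2]. split.
    + exists j, i; auto.
    + intros c r Hc. specialize (H2 c r Hc). tauto.
  - intros a b c [[i [j [Hi [Hj E]]]] H2] [[k [l [Hk [Hl F]]]] H3]. split.
    + exists (add i k), (add l j). repeat split; auto.
      rewrite addA, E, <- addA, (addC j k), addA, F, <- addA. reflexivity.
    + intros d r Hd. specialize (H2 d r Hd). specialize (H3 d r Hd). tauto.
Qed.

Lemma cong_compat (A : Type) (add mul : A -> A -> A) (zero one : A) (I : A -> Prop) :
  comm_semiring add mul zero one -> is_ideal add mul zero I ->
  (forall a a' b b', cong_mod add mul I a a' -> cong_mod add mul I b b' ->
     cong_mod add mul I (add a b) (add a' b') /\
     cong_mod add mul I (mul a b) (mul a' b')).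
Proof.
  intros [addA [addC [add0 [mulA [mulC [mul1 [mulDr [mulDl mul0]]]]]]]] [I0 [IA IM]].
  assert (sw : forall x y z, add (add x y) z = add (add x z) y).
  { intros x y z. rewrite <- addA, (addC y z), addA. reflexivity. }
  intros a a' b b' [[i [j [Hi [Hj E]]]] Ha] [[k [l [Hk [Hl F]]]] Hb]. split; split.
  - exists (add i k), (add j l). repeat split; auto.
    rewrite addA, (sw a b i), <- (addA (add a i)), E, F.
    rewrite !addA, (sw a' j b'). reflexivity.
  - intros c r Hc. rewrite !mulDl, <- !addA.
    rewrite (Ha c (add (mul b c) r) Hc).
    rewrite !addA, (addC (mul a' c) (mul b c)), (addC (mul a' c) (mul b' c)), <- !addA.
    apply Hb; auto.
  - exists (add (mul i b) (mul a' k)), (add (mul a' l) (mul j b)).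
    split; [apply IA; [rewrite mulC|]; apply IM; auto|].
    split; [apply IA; [|rewrite mulC]; apply IM; auto|].
    rewrite addA, <- mulDl, E, mulDl, (sw _ (mul j b)), <- mulDr, F, mulDr.
    rewrite <- !addA. reflexivity.
  - intros c r Hc.
    rewrite <- !mulA.
    rewrite (Ha (mul b c) r (IM _ _ Hc)).
    rewrite mulA, (mulC a' b), <- mulA.
    rewrite (Hb (mul a' c) r (IM _ _ Hc)).
    rewrite mulA, (mulC b' a'), <- mulA. tauto.
Qed.

Lemma sig_eq {T} (P : T -> Prop) (x y : sig P) : proj1_sig x = proj1_sig y -> x = y.
Proof. destruct x, y; simpl; intros ->; f_equal; apply proof_irrelevance. Qed.

Theorem proposition2p2 (A : Type) (add mul : A -> A -> A) (zero one : A)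
    (I : A -> Prop) :
  comm_quasi_ring add mul zero one ->
  is_ideal add mul zero I ->
  (* congruence mod I is an equivalence relation compatible with + and . *)
  Equivalence (cong_mod add mul I) /\
  (forall a a' b b', cong_mod add mul I a a' -> cong_mod add mul I b b' ->
     cong_mod add mul I (add a b) (add a' b') /\
     cong_mod add mul I (mul a b) (mul a' b')) /\
  (* hence the quotient A/I, with the induced operations, is a quasi-ring *)
  (exists (Q : Type) (addQ mulQ : Q -> Q -> Q) (zeroQ oneQ : Q) (pi : A -> Q),
     comm_quasi_ring addQ mulQ zeroQ oneQ /\
     (forall q, exists a, pi a = q) /\
     (forall a b, pi a = pi b <-> cong_mod add mul I a b) /\
     (forall a b, pi (add a b) = addQ (pi a) (pi b)) /\
     (forall a b, pi (mul a b) = mulQ (pi a) (pi b)) /\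
     pi zero = zeroQ /\ pi one = oneQ) /\
  (* if I <> A then A/I is not trivial *)
  ((exists a, ~ I a) -> ~ cong_mod add mul I one zero).
Proof.
  intros [Hs [y [Hy1 Hy2]]] Hid.
  pose proof (cong_equiv A add mul zero one I Hs Hid) as Heq.
  pose proof (cong_compat A add mul zero one I Hs Hid) as Hc.
  set (C := cong_mod add mul I) in *.
  split; [exact Heq|]. split; [exact Hc|]. split.
  - set (Q := {P : A -> Prop | exists a, P = C a}).
    set (pi := fun a : A => exist (fun P => exists a, P = C a) (C a) (ex_intro _ a eq_refl) : Q).
    set (rep := fun q : Q => proj1_sig (constructive_indefinite_description _ (proj2_sig q))).
    assert (pirep : forall q, pi (rep q) = q).
    { intros q. apply sig_eq. unfold rep, pi. simpl.
      destruct (constructive_indefinite_description _ (proj2_sig q)) as [a Ha]. simpl.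
      symmetry; exact Ha. }
    assert (piiff : forall a b, pi a = pi b <-> C a b).
    { intros a b. split.
      - intros E. apply (f_equal (@proj1_sig _ _)) in E. simpl in E.
        rewrite E. reflexivity.
      - intros H. apply sig_eq. simpl. apply functional_extensionality. intros x.
        apply propositional_extensionality. split; intros H'.
        + symmetry in H. etransitivity; eauto.
        + etransitivity; eauto. }
    assert (reprel : forall a, C (rep (pi a)) a).
    { intros a. apply piiff. apply pirep. }
    exists Q, (fun p q => pi (add (rep p) (rep q))), (fun p q => pi (mul (rep p) (rep q))),
      (pi zero), (pi one), pi.
    assert (hadd : forall a b, pi (add a b) = pi (add (rep (pi a)) (rep (pi b)))).
    { intros a b. apply piiff. symmetry. apply Hc; apply reprel. }
    assert (hmul : forall a b, pi (mul a b) = pi (mul (rep (pi a)) (rep (pi b)))).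
    { intros a b. apply piiff. symmetry. apply Hc; apply reprel. }
    destruct Hs as [addA [addC [add0 [mulA [mulC [mul1 [mulDr [mulDl mul0]]]]]]]].
    split; [|split; [|split; [|split; [|split; [| split]]]]].
    + assert (surj : forall q, exists a, pi a = q) by (intros q; exists (rep q); apply pirep).
      split; [repeat split|].
      * intros p q r. destruct (surj p) as [a <-], (surj q) as [b <-], (surj r) as [c <-].
        rewrite <- (hadd b c), <- (hadd a b), <- hadd, <- hadd, addA. reflexivity.
      * intros p q. destruct (surj p) as [a <-], (surj q) as [b <-].
        rewrite <- !hadd, addC. reflexivity.
      * intros p. destruct (surj p) as [a <-]. rewrite <- hadd, add0. reflexivity.
      * intros p q r. destruct (surj p) as [a <-], (surj q) as [b <-], (surj r) as [c <-].
        rewrite <- (hmul b c), <- (hmul a b), <- hmul, <- hmul, mulA. reflexivity.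
      * intros p q. destruct (surj p) as [a <-], (surj q) as [b <-].
        rewrite <- !hmul, mulC. reflexivity.
      * intros p. destruct (surj p) as [a <-]. rewrite <- hmul, mul1. reflexivity.
      * intros p q r. destruct (surj p) as [a <-], (surj q) as [b <-], (surj r) as [c <-].
        rewrite <- (hadd b c), <- hmul, <- (hmul a b), <- (hmul a c), <- hadd, mulDr. reflexivity.
      * intros p q r. destruct (surj p) as [a <-], (surj q) as [b <-], (surj r) as [c <-].
        rewrite <- (hadd a b), <- hmul, <- (hmul a c), <- (hmul b c), <- hadd, mulDl. reflexivity.
      * destruct (surj x) as [a <-]. rewrite <- hmul; f_equal; apply mul0.
      * destruct (surj x) as [a <-]. rewrite <- hmul; f_equal; apply mul0.
      * exists (pi y). rewrite <- (hadd one y), <- hadd, <- (hadd y one), <- hadd, Hy1, Hy2. auto.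
    + intros q. exists (rep q). apply pirep.
    + exact piiff.
    + exact hadd.
    + exact hmul.
    + reflexivity.
    + reflexivity.
  - intros [a Ha] [[i [j [Hi [Hj E]]]] H2].
    destruct Hs as [addA [addC [add0 [mulA [mulC [mul1 [mulDr [mulDl mul0]]]]]]]].
    destruct Hid as [I0 [IA IM]].
    rewrite add0 in E.
    assert (Hai : I (add a (mul a i))).
    { replace (add a (mul a i)) with (mul a (add one i)).
      - apply IM. rewrite E. exact Hj.
      - rewrite mulDr, (mulC a one), mul1. reflexivity. }
    apply Ha. specialize (H2 (mul a i) a (IM _ _ Hi)).
    rewrite mul1, (proj1 (mul0 _)), add0 in H2.
    apply H2. rewrite addC. exact Hai.
Qed.
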